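(* Let $k \ge 2$, $n \ge 1$ and $d \ge 1$ be integers, and let $f:[2k]^n \to \mathbb{R}^d$ satisfy $\|f(x_1,\ldots,x_n)\|_1 \le 1$ for all $x_1,\ldots,x_n \in [2k]$. For $0 \le \ell \le n$ and $x_1,\ldots,x_\ell \in [2k]$, let $f(x_1,\ldots,x_\ell)$ denote the average of $f(x_1,\ldots,x_n)$ over $x_{\ell+1},\ldots,x_n$ chosen uniformly and independently in $[2k]$. Suppose that for some $\varepsilon < 1/(k-1)$ the following holds for all $\ell \in [n]$, all $x_1,\ldots,x_{\ell-1} \in [2k]$ and all $r \in [k-1]$: $$\frac{1}{2k} \left\| \sum_{b=1}^r \bigl(f(x_1,\ldots,x_{\ell-1},b) + f(x_1,\ldots,x_{\ell-1},b+k)\bigr) - \sum_{b=r+1}^k \bigl(f(x_1,\ldots,x_{\ell-1},b) + f(x_1,\ldots,x_{\ell-1},b+k)\bigr) \right\|_1 \ge 1-\varepsilon.$$ Let $\delta := (k-1)\varepsilon/2$ (so $\delta < 1/2$). Then $$ d \ge 2^{(\log k - \delta \log (k-1) - H(\delta))n - 1} - \frac{1}{2}.$$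
   Context: $[m]$ denotes $\{1,\ldots,m\}$. All logarithms are base $2$. $H(\delta) := -\delta \log \delta - (1-\delta)\log(1-\delta)$ is the binary entropy function (with $0\log 0 = 0$). $\|\cdot\|_1$ is the $\ell_1$ norm on $\mathbb{R}^d$. *)

(* Defs.v *)
From HB Require Import structures.
From mathcomp Require Import all_boot all_order all_algebra.
From mathcomp Require Import all_classical all_reals all_analysis.
Set Implicit Arguments. Unset Strict Implicit. Unset Printing Implicit Defensive.
Import Order.TTheory GRing.Theory Num.Theory.
Local Open Scope ring_scope.

(* R : realType. Points of [2k]^n are
   x : {ffun 'I_n -> 'I_(2*k)}, with the value j : 'I_(2k) standing for j+1. *)

Definition log2 {R : realType} (x : R) : R := ln x / ln 2.

Definition xlog2x {R : realType} (x : R) : R := if x == 0 then 0 else x * log2 x.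
Definition Hbin {R : realType} (t : R) : R := - xlog2x t - xlog2x (1 - t).

Definition norm1 {R : realType} {d : nat} (v : 'rV[R]_d) : R :=
  \sum_(j < d) `|v 0 j|.

(* partial average f(x_1,...,x_m): average of f(y) over all y agreeing with
   x on the first m coordinates (0-based indices < m), the remaining n-m
   coordinates being uniform and independent in [2k]. *)
Definition pavg {R : realType} {k n d : nat}
  (f : {ffun 'I_n -> 'I_(2*k)} -> 'rV[R]_d) (m : nat) (x : {ffun 'I_n -> 'I_(2*k)})
  : 'rV[R]_d :=
  ((2 * k)%:R ^+ (n - m))^-1 *:
    \sum_(y : {ffun 'I_n -> 'I_(2*k)} | [forall j : 'I_n, (j < m)%N ==> (y j == x j)]) f y.

Definition setc {k n : nat} (x : {ffun 'I_n -> 'I_(2*k)}) (i : 'I_n) (b : 'I_(2*k))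
  : {ffun 'I_n -> 'I_(2*k)} :=
  [ffun j => if j == i then b else x j].

(* Main.v *)
Require Import Defs.
From HB Require Import structures.
From mathcomp Require Import all_boot all_order all_algebra.
From mathcomp Require Import all_classical all_reals all_analysis.
From mathcomp Require Import lra ring zify.
Import Order.TTheory GRing.Theory Num.Theory.
Local Open Scope ring_scope.
Set Implicit Arguments. Unset Strict Implicit. Unset Printing Implicit Defensive.

Section Comb.
Variables (k n : nat).
Local Notation X := {ffun 'I_n -> 'I_(2*k)}.

Definition agree (m : nat) (x y : X) : bool :=
  [forall j : 'I_n, (j < m)%N ==> (y j == x j)].

Lemma agreeP m (x y : X) : reflect (forall j : 'I_n, (j < m)%N -> y j = x j) (agree m x y).
Proof.
apply: (iffP forallP) => H j.
  by move=> hj; apply/eqP; have := H j; rewrite hj.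
by apply/implyP => hj; apply/eqP; apply: H.
Qed.

Lemma agree_sym m (x y : X) : agree m x y = agree m y x.
Proof. by apply/agreeP/agreeP => H j hj; rewrite H. Qed.

Lemma agree_trans m (x y z : X) : agree m x y -> agree m y z -> agree m x z.
Proof. by move=> /agreeP H1 /agreeP H2; apply/agreeP => j hj; rewrite H2 // H1. Qed.

Lemma agree_le m m' (x y : X) : (m <= m')%N -> agree m' x y -> agree m x y.
Proof. by move=> hm /agreeP H; apply/agreeP => j hj; apply: H; apply: leq_trans hm. Qed.

Lemma agree_setc (i : 'I_n) (x y : X) b :
  agree i.+1 (setc x i b) y = agree i x y && (y i == b).
Proof.
apply/agreeP/andP => [H|[/agreeP H /eqP Hb] j hj].
  split; last by rewrite H // ffunE eqxx.
  apply/agreeP => j hj; rewrite H ?ffunE; last by apply: ltnW.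
  by have -> : (j == i) = false by apply/negbTE; rewrite neq_ltn hj.
rewrite ffunE; case: eqP => [->//|hne]; apply: H.
by rewrite ltnS leq_eqVlt in hj; case/orP: hj => // /eqP/val_inj.
Qed.

Lemma agree_setc2 (i : 'I_n) (x y : X) b : agree i x y -> agree i.+1 (setc x i b) (setc y i b).
Proof.
move=> h; rewrite agree_setc; apply/andP; split; last by rewrite ffunE eqxx.
rewrite agree_sym; apply/agreeP => j hj; rewrite ffunE.
have -> : (j == i) = false by apply/negbTE; rewrite neq_ltn hj.
by move/agreeP: h => ->.
Qed.

Lemma split_agree (T : Type) (idx : T) (op : Monoid.com_law idx) (i : 'I_n) x (F : X -> T) :
  \big[op/idx]_(y | agree i x y) F y =
  \big[op/idx]_(b : 'I_(2*k)) \big[op/idx]_(y | agree i.+1 (setc x i b) y) F y.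
Proof.
rewrite (partition_big (fun y : X => y i) predT) //=.
by apply: eq_bigr => b _; apply: eq_bigl => y; rewrite agree_setc.
Qed.

Lemma card_agree_aux t : forall m x, (m + t = n)%N ->
  #|[pred y | agree m x y]| = ((2*k) ^ t)%N.
Proof.
elim: t => [|t IH] m x hm.
  rewrite addn0 in hm; subst m; rewrite expn0.
  transitivity #|pred1 x|; last exact: card1.
  apply: eq_card => y /=; rewrite !inE.
  apply/agreeP/eqP => [H|->//]; apply/ffunP => j; exact: H.
have hmn : (m < n)%N by rewrite -hm addnS ltnS leq_addr.
rewrite -sum1_card (split_agree _ (Ordinal hmn)) /=.
rewrite (eq_bigr (fun _ => ((2*k) ^ t)%N)); last first.
  by move=> b _; rewrite sum1_card IH // addSnnS.
by rewrite sum_nat_const card_ord expnS.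
Qed.

Lemma card_agree m x : (m <= n)%N -> #|[pred y | agree m x y]| = ((2*k) ^ (n - m))%N.
Proof. by move=> hm; apply: card_agree_aux; rewrite subnKC. Qed.

Lemma avg_id (R : realType) m (F : X -> R) : (0 < k)%N -> (m <= n)%N ->
  \sum_x F x = \sum_x ((2*k)%:R ^+ (n - m))^-1 * \sum_(y | agree m x y) F y.
Proof.
move=> hk hm.
rewrite -big_distrr /= (exchange_big_dep predT) //=.
rewrite [in RHS](eq_bigr (fun y => F y * ((2*k)%:R ^+ (n-m)))).
  rewrite -big_distrl /= mulrCA mulVf ?mulr1 //.
  by rewrite expf_neq0 // pnatr_eq0 muln_eq0 /= -lt0n hk.
move=> y _; rewrite (eq_bigl (fun x => agree m y x)); last by move=> x; rewrite agree_sym.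
rewrite sumr_const -natrX -(card_agree y hm) mulr_natr; congr (_ *+ _); apply: eq_card => x; by rewrite !inE.
Qed.

End Comb.

Lemma cast_sum (R : realType) (m m' : nat) (e : m = m') (G : 'I_m' -> R) :
  \sum_(b : 'I_m') G b = \sum_(b : 'I_m) G (cast_ord e b).
Proof. by case: m' / e G => G; apply: eq_bigr => b _; rewrite cast_ord_id. Qed.

Section Half.
Variable k : nat.
Lemma e2 : (k + k = 2 * k)%N. Proof. by rewrite mul2n addnn. Qed.
Definition lo (b : 'I_k) : 'I_(2*k) := cast_ord e2 (lshift k b).
Definition hi (b : 'I_k) : 'I_(2*k) := cast_ord e2 (rshift k b).
Lemma lo_val b : val (lo b) = val b. Proof. by []. Qed.
Lemma hi_val b : val (hi b) = (k + b)%N. Proof. by []. Qed.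
Lemma sum_split2 (R : realType) (G : 'I_(2*k) -> R) :
  \sum_b G b = \sum_(b : 'I_k) (G (lo b) + G (hi b)).
Proof. by rewrite (cast_sum e2) big_split_ord big_split. Qed.
Lemma lo_mod (b : 'I_k) : (lo b %% k = b)%N.
Proof. exact: modn_small (ltn_ord b). Qed.
Lemma hi_mod (b : 'I_k) : (hi b %% k = b)%N.
Proof. by change ((k + b) %% k = b)%N; rewrite modnDl modn_small. Qed.
End Half.

Section Labels.
Variables (R : realType) (k n d : nat).
Local Notation X := {ffun 'I_n -> 'I_(2*k)}.
Variable f : X -> 'rV[R]_d.
Hypothesis hf : forall x, norm1 (f x) <= 1.

Definition lab := (unit + ('I_d * bool))%type.
Definition Pl (y : X) (l : lab) : R :=
  match l with
  | inl _ => 1 - norm1 (f y)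
  | inr p => if p.2 then Num.max (f y 0 p.1) 0 else Num.max (- f y 0 p.1) 0
  end.

Lemma Pl_ge0 y l : 0 <= Pl y l.
Proof.
case: l => [_|[j []]] /=.
- by rewrite subr_ge0.
- by rewrite le_max lexx orbT.
- by rewrite le_max lexx orbT.
Qed.

Lemma Pl_sum y : \sum_l Pl y l = 1.
Proof.
rewrite big_sumType /=.
rewrite (eq_bigl (pred1 tt)); last by case.
rewrite big_pred1_eq /=.
have -> : \sum_(p : 'I_d * bool) Pl y (inr p) = \sum_j \sum_b Pl y (inr (j, b)).
  by rewrite pair_bigA; apply: eq_bigr => -[].
rewrite /norm1.
rewrite [X in _ + X](eq_bigr (fun j => `|f y 0 j|)) ?subrK // => j _.
rewrite big_bool /=.
have [h|h] : 0 <= f y 0 j \/ f y 0 j < 0 by case: lerP; auto.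
  rewrite ger0_norm // (max_l h) max_r ?addr0 //; lra.
rewrite ltr0_norm // (max_r (ltW h)) max_l ?add0r //; lra.
Qed.

Lemma Pl_le1 y l : Pl y l <= 1.
Proof.
rewrite -(Pl_sum y) (bigD1 l) //= lerDl.
by apply: sumr_ge0 => l' _; apply: Pl_ge0.
Qed.

Lemma f_Pl y j : f y 0 j = Pl y (inr (j, true)) - Pl y (inr (j, false)).
Proof.
rewrite /=; have [h|h] : 0 <= f y 0 j \/ f y 0 j < 0 by case: lerP; auto.
  rewrite (max_l h) max_r ?subr0 //; lra.
rewrite (max_r (ltW h)) max_l; lra.
Qed.

Definition q m (x : X) l : R :=
  ((2*k)%:R ^+ (n - m))^-1 * \sum_(y | agree m x y) Pl y l.

Lemma q_ge0 m x l : 0 <= q m x l.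
Proof.
rewrite /q mulr_ge0 // ?invr_ge0 ?exprn_ge0 ?ler0n //.
by apply: sumr_ge0 => y _; apply: Pl_ge0.
Qed.

Lemma q_sum m x : (0 < k)%N -> (m <= n)%N -> \sum_l q m x l = 1.
Proof.
move=> hk hm; rewrite /q -big_distrr /= exchange_big /=.
rewrite (eq_bigr (fun _ => 1)); last by move=> y _; apply: Pl_sum.
rewrite sumr_const.
rewrite (_ : #|_| = ((2*k) ^ (n - m))%N); last by rewrite -(card_agree x hm); apply: eq_card => y; rewrite !inE.
rewrite -[_ *+ _]mulr_natr mul1r natrX mulVf //.
by rewrite expf_neq0 // pnatr_eq0 muln_eq0 /= -lt0n hk.
Qed.

Lemma q_agree m x x' l : agree m x x' -> q m x l = q m x' l.
Proof.
move=> h; rewrite /q; congr (_ * _); apply: eq_bigl => y.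
apply/idP/idP => h2.
  by apply: agree_trans h2; rewrite agree_sym.
by apply: agree_trans h2.
Qed.

Lemma pavg_q m x j : pavg f m x 0 j = q m x (inr (j, true)) - q m x (inr (j, false)).
Proof.
rewrite /pavg /q mxE summxE -mulrBr -sumrB; congr (_ * _).
by apply: eq_bigr => y _; rewrite f_Pl.
Qed.

End Labels.
Lemma term_le_sum (R : realType) (a b j : nat) (Q : nat -> R) :
  (forall i, (a <= i < b)%N -> 0 <= Q i) -> (a <= j < b)%N ->
  Q j <= \sum_(a <= i < b) Q i.
Proof.
move=> Q0 hj.
rewrite (bigD1_seq j) ?iota_uniq ?mem_index_iota //= lerDl.
rewrite big_seq_cond; apply: sumr_ge0 => i /andP[hi _]; apply: Q0.
by rewrite mem_index_iota in hi.
Qed.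

Lemma key_ineq (R : realType) (k m : nat) (Q : nat -> R) :
  (m < k)%N -> (forall b, (b < k)%N -> 0 <= Q b) ->
  (forall b, (b < k)%N -> Q b <= Q m) ->
  \sum_(1 <= r < k) `|\sum_(0 <= b < k) (if (b < r)%N then Q b else - Q b)|
  <= (k%:R - 3) * \sum_(0 <= b < k) Q b + 2 * Q m.
Proof.
move=> hm Q0 Qm.
have Q0' : forall a b i, (b <= k)%N -> (a <= i < b)%N -> 0 <= Q i.
  by move=> a b i hb /andP[_ hi]; apply: Q0; apply: leq_trans hi hb.
set S := \sum_(0 <= b < k) Q b.
pose t r := if (r <= m)%N then Q r.-1 else Q r.
have step : forall r, (1 <= r < k)%N ->
    `|\sum_(0 <= b < k) (if (b < r)%N then Q b else - Q b)| <= S - 2 * t r.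
  move=> r /andP[r1 rk].
  pose P := \sum_(0 <= b < r) Q b.
  pose U := \sum_(r <= b < k) Q b.
  have eS : S = P + U by rewrite /S (@big_cat_nat _ _ _ r) // ltnW.
  have -> : \sum_(0 <= b < k) (if (b < r)%N then Q b else - Q b) = P - U.
    rewrite (@big_cat_nat _ _ _ r 0 k) //=; last exact: ltnW.
    congr (_ + _).
      by apply: eq_big_nat => b /andP[_ ->].
    rewrite -sumrN; apply: eq_big_nat => b /andP[hb _]; by rewrite ltnNge hb.
  have hP : t r <= P.
    rewrite /t /P; case: ifP => hrm.
      apply: term_le_sum; first by move=> i; apply: (Q0' _ _ i (ltnW rk)).
      by rewrite leq0n /= prednK.
    have hmr : (m < r)%N by rewrite ltnNge hrm.
    apply: le_trans (Qm _ rk) _.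
    apply: term_le_sum; first by move=> i; apply: (Q0' _ _ i (ltnW rk)).
    by rewrite leq0n.
  have hU : t r <= U.
    rewrite /t /U; case: ifP => hrm.
      apply: le_trans (Qm _ (leq_ltn_trans (leq_pred r) rk)) _.
      by apply: term_le_sum => //; [move=> i; apply: (Q0' _ _ i (leqnn k))|rewrite hrm hm].
    by apply: term_le_sum => //; [move=> i; apply: (Q0' _ _ i (leqnn k))|rewrite leqnn rk].
  rewrite eS ler_norml; apply/andP; split; lra.
have ht : \sum_(1 <= r < k) t r = S - Q m.
  rewrite (@big_cat_nat _ _ _ m.+1) //=.
  rewrite (eq_big_nat _ _ (F2 := fun r => Q r.-1)); last first.
    by move=> r /andP[_ hr]; rewrite /t -ltnS hr.
  rewrite big_add1 /= (eq_big_nat _ _ (F1 := fun r => t r) (F2 := Q)); last first.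
    by move=> r /andP[hr _]; rewrite /t leqNgt hr.
  rewrite /S (@big_cat_nat _ _ _ m 0 k) //=; last exact: ltnW.
  rewrite (@big_ltn _ _ _ m k) //=.
  lra.
apply: (@le_trans _ _ (\sum_(1 <= r < k) (S - 2 * t r))).
  by apply: ler_sum_nat => r hr; apply: step.
rewrite big_split /= sumrN -mulr_sumr ht sumr_const_nat.
have -> : S *+ (k - 1)%N = S * (k%:R - 1).
  by rewrite -[LHS]mulr_natr natrB //; exact: leq_ltn_trans (leq0n m) hm.
lra.
Qed.

Section Node.
Variables (R : realType) (k : nat) (L : finType).
Hypothesis hk : (2 <= k)%N.
Definition k0 : 'I_k := Ordinal (ltnW hk).
Definition Qh (a : 'I_(2*k) -> L -> R) l (b : 'I_k) := a (lo b) l + a (hi b) l.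
Definition cdec (a : 'I_(2*k) -> L -> R) l : 'I_k := [arg max_(b > k0) Qh a l b]%O.

Lemma cdec_max a l b : Qh a l b <= Qh a l (cdec a l).
Proof. by rewrite /cdec; case: arg_maxP => // i _ H; apply: H. Qed.

Lemma ord_sum_nat (G : 'I_k -> R) : \sum_(b : 'I_k) G b = \sum_(0 <= b < k) G (insubd k0 b).
Proof. by rewrite big_mkord; apply: eq_bigr => b _; rewrite valKd. Qed.

Lemma node_err (a : 'I_(2*k) -> L -> R) eps :
  (forall b l, 0 <= a b l) -> (forall b, \sum_l a b l = 1) ->
  (forall r, (1 <= r)%N -> (r <= k - 1)%N ->
     (2*k)%:R * (1 - eps) <= \sum_l `|\sum_(b : 'I_k) (if (b < r)%N then Qh a l b else - Qh a l b)|) ->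
  \sum_l \sum_b a b l * ((b %% k)%N != cdec a l)%:R <= (k%:R * (k%:R - 1)) * eps.
Proof.
move=> a0 a1 H.
have eT : \sum_l \sum_(b : 'I_k) Qh a l b = (2*k)%:R.
  rewrite (eq_bigr (fun l => \sum_b a b l)); last by move=> l _; rewrite sum_split2.
  rewrite exchange_big /= (eq_bigr (fun _ => 1)); last by move=> b _; apply: a1.
  by rewrite sumr_const card_ord.
have eE : forall l, \sum_b a b l * ((b %% k)%N != cdec a l)%:R =
                   \sum_(b : 'I_k) Qh a l b - Qh a l (cdec a l).
  move=> l; rewrite sum_split2 (bigD1 (cdec a l)) //= [in RHS](bigD1 (cdec a l)) //=.
  rewrite lo_mod hi_mod eqxx mulr0 mulr0 addr0 add0r addrAC subrr add0r.
  apply: eq_bigr => b hb; rewrite lo_mod hi_mod.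
  by rewrite (_ : (b : nat) != cdec a l) ?mulr1 //.
have kb : forall l, \sum_(1 <= r < k) `|\sum_(b : 'I_k) (if (b < r)%N then Qh a l b else - Qh a l b)|
     <= (k%:R - 3) * \sum_(b : 'I_k) Qh a l b + 2 * Qh a l (cdec a l).
  move=> l.
  have Q0 : forall b, 0 <= Qh a l b by move=> b; rewrite /Qh addr_ge0.
  rewrite ord_sum_nat.
  rewrite (eq_big_nat _ _ (F2 := fun r => `|\sum_(0 <= b < k) (if (b < r)%N then Qh a l (insubd k0 b) else - Qh a l (insubd k0 b))|)); last first.
    move=> r _; rewrite ord_sum_nat; congr `|_|; apply: eq_big_nat => b /andP[_ hb].
    by rewrite val_insubd hb.
  have -> : Qh a l (cdec a l) = Qh a l (insubd k0 (cdec a l)) by rewrite valKd.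
  apply: (@key_ineq R k (cdec a l) (fun b => Qh a l (insubd k0 b))) => //.
  by move=> b _; rewrite valKd; apply: cdec_max.
have sumH : \sum_(1 <= r < k) (2*k)%:R * (1 - eps) <=
    \sum_l ((k%:R - 3) * \sum_(b : 'I_k) Qh a l b + 2 * Qh a l (cdec a l)).
  rewrite (@le_trans _ _ (\sum_l \sum_(1 <= r < k) `|\sum_(b : 'I_k) (if (b < r)%N then Qh a l b else - Qh a l b)|)) //.
    rewrite exchange_big /=; apply: ler_sum_nat => r /andP[r1 rk]; apply: H => //.
    by move: rk; clear; lia.
  by apply: ler_sum => l _; apply: kb.
rewrite sumr_const_nat big_split /= -!mulr_sumr eT in sumH.
rewrite (eq_bigr _ (fun l _ => eE l)) sumrB eT.
move: sumH; set M := \sum_l Qh a l (cdec a l).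
have -> : ((2*k)%:R : R) = 2 * k%:R by rewrite natrM.
rewrite -[2 * k%:R * (1 - eps) *+ (k - 1)]mulr_natr natrB; last exact: ltnW hk.
move=> sumH; nra.
Qed.
End Node.

Lemma sum_sign (R : realType) (T : finType) (S : pred T) (G : T -> R) :
  \sum_(b | S b) G b - \sum_(b | ~~ S b) G b = \sum_b (if S b then G b else - G b).
Proof.
rewrite [RHS](bigID S) /= -sumrN; congr (_ + _); apply: eq_bigr => b hb.
  by rewrite hb.
by rewrite (negbTE hb).
Qed.

Section Main.
Variables (R : realType) (k n d : nat).
Local Notation X := {ffun 'I_n -> 'I_(2*k)}.
Variable f : X -> 'rV[R]_d.
Hypothesis hf : forall x, norm1 (f x) <= 1.
Hypothesis hk : (2 <= k)%N.
Let k_gt0 : (0 < k)%N := ltnW hk.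
Local Notation NR := ((2*k)%:R : R).

Lemma NR_gt0 : 0 < NR.
Proof. by rewrite ltr0n muln_gt0 k_gt0. Qed.

Definition aN (i : 'I_n) (x : X) (b : 'I_(2*k)) (l : lab d) : R := q f i.+1 (setc x i b) l.
Definition cN (i : 'I_n) (x : X) (l : lab d) : 'I_k := cdec hk (aN i x) l.

Lemma aN_agree (i : 'I_n) (x y : X) : agree i x y -> aN i x = aN i y.
Proof.
move=> h; apply: funext => b; apply: funext => l.
by rewrite /aN; apply: q_agree; apply: agree_setc2.
Qed.

Lemma cN_agree (i : 'I_n) (x y : X) l : agree i x y -> cN i x l = cN i y l.
Proof. by move=> h; rewrite /cN (aN_agree h). Qed.

Definition Sr (r : nat) (b : 'I_(2*k)) : bool :=
  ((b < r)%N || ((k <= b)%N && (b < k + r)%N)).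

Lemma hyp_conv (i : 'I_n) (x : X) r eps : (1 <= r)%N -> (r <= k - 1)%N ->
  (2 * k)%:R^-1 * norm1
       (\sum_(b : 'I_(2*k) | ((b < r)%N || ((k <= b)%N && (b < k + r)%N)))
           pavg f i.+1 (setc x i b)
        - \sum_(b : 'I_(2*k) | ~~ ((b < r)%N || ((k <= b)%N && (b < k + r)%N)))
           pavg f i.+1 (setc x i b)) >= 1 - eps ->
  NR * (1 - eps) <= \sum_l `|\sum_(b : 'I_k) (if (b < r)%N then Qh (aN i x) l b else - Qh (aN i x) l b)|.
Proof.
move=> r1 rk H.
set D := (X in norm1 X) in H.
have Hn : NR * (1 - eps) <= norm1 D.
  have := ler_wpM2l (ltW NR_gt0) H; rewrite mulrA mulfV ?mul1r //.
  exact: lt0r_neq0 NR_gt0.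
apply: (le_trans Hn) => {Hn H}.
pose A l := \sum_b (if Sr r b then aN i x b l else - aN i x b l).
have eD : forall j, D 0 j = A (inr (j, true)) - A (inr (j, false)).
  move=> j; rewrite /D !mxE !summxE sum_sign /A -sumrB; apply: eq_bigr => b _.
  rewrite pavg_q /aN /Sr; case: ifP => _ //; by rewrite opprD opprK.
have eA : forall l, A l = \sum_(b : 'I_k) (if (b < r)%N then Qh (aN i x) l b else - Qh (aN i x) l b).
  move=> l; rewrite /A sum_split2; apply: eq_bigr => b _.
  have -> : Sr r (lo b) = (b < r)%N.
    rewrite /Sr; change ((((b:nat) < r)%N || ((k <= b)%N && (b < k + r)%N)) = (b < r)%N).
    have := ltn_ord b; move: (b : nat) => bb hb; apply/idP/idP; lia.
  have -> : Sr r (hi b) = (b < r)%N.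
    rewrite /Sr; change (((k + b < r)%N || ((k <= k + b)%N && (k + b < k + r)%N)) = (b < r)%N).
    have := ltn_ord b; move: (b : nat) => bb hb; apply/idP/idP; lia.
  by rewrite /Qh; case: ifP => _ //; rewrite opprD.
apply: (@le_trans _ _ (\sum_l `|A l|)); last by apply: ler_sum => l _; rewrite eA.
rewrite /norm1 big_sumType /=.
apply: (@le_trans _ _ (\sum_(p : 'I_d * bool) `|A (inr p)|)); last first.
  by rewrite lerDr; apply: sumr_ge0.
have -> : \sum_(p : 'I_d * bool) `|A (inr p)| = \sum_j \sum_s `|A (inr (j, s))|.
  by rewrite pair_bigA; apply: eq_bigr => -[].
apply: ler_sum => j _; rewrite eD big_bool /=.
exact: ler_normB.
Qed.

Lemma level_err (i : 'I_n) eps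
  (hyp : forall (x : X) (r : nat), (1 <= r)%N -> (r <= k - 1)%N ->
     (2 * k)%:R^-1 * norm1
       (\sum_(b : 'I_(2*k) | ((b < r)%N || ((k <= b)%N && (b < k + r)%N)))
           pavg f i.+1 (setc x i b)
        - \sum_(b : 'I_(2*k) | ~~ ((b < r)%N || ((k <= b)%N && (b < k + r)%N)))
           pavg f i.+1 (setc x i b)) >= 1 - eps) :
  \sum_x \sum_l Pl f x l * ((x i %% k)%N != cN i x l)%:R <= NR ^+ n * ((k - 1)%:R * eps / 2).
Proof.
have hi : (i <= n)%N by apply: ltnW.
have NR0 : NR != 0 by exact: lt0r_neq0 NR_gt0.
rewrite (@avg_id k n R i _ k_gt0 hi).
have node : forall x : X, \sum_(y | agree i x y) \sum_l Pl f y l * ((y i %% k)%N != cN i y l)%:R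
     <= NR ^+ (n - i.+1) * (k%:R * (k%:R - 1) * eps).
  move=> x.
  rewrite (eq_bigr (fun y => \sum_l Pl f y l * ((y i %% k)%N != cN i x l)%:R)); last first.
    by move=> y hy; apply: eq_bigr => l _; rewrite (@cN_agree i y x l) // agree_sym.
  rewrite exchange_big /=.
  rewrite (eq_bigr (fun l => NR ^+ (n - i.+1) * \sum_b aN i x b l * ((b %% k)%N != cN i x l)%:R)); last first.
    move=> l _; rewrite (split_agree _ i) mulr_sumr; apply: eq_bigr => b _.
    rewrite (eq_bigr (fun y => Pl f y l * ((b %% k)%N != cN i x l)%:R)); last first.
      by move=> y; rewrite agree_setc => /andP[_ /eqP ->].
    rewrite -big_distrl /= mulrA; congr (_ * _).
    by rewrite /aN /q mulrA mulfV ?mul1r // expf_neq0.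
  rewrite -mulr_sumr; apply: ler_wpM2l; first exact: exprn_ge0 (ltW NR_gt0).
  apply: node_err.
  - by move=> b l; apply: q_ge0.
  - by move=> b; apply: q_sum.
  - by move=> r r1 rk; apply: hyp_conv => //; apply: hyp.
apply: (@le_trans _ _ (\sum_(x : X) (NR ^+ (n - i))^-1 * (NR ^+ (n - i.+1) * (k%:R * (k%:R - 1) * eps)))).
  apply: ler_sum => x _; apply: ler_wpM2l; last exact: node.
  by rewrite invr_ge0 exprn_ge0 // ltW // NR_gt0.
rewrite sumr_const card_ffun !card_ord -(subnSK (ltn_ord i)) exprS.
set P := NR ^+ (n - i.+1).
have P0 : P != 0 by rewrite expf_neq0.
have k0 : (k%:R : R) != 0 by rewrite pnatr_eq0 -lt0n.
rewrite -[_ *+ _]mulr_natr natrX natrB; last exact: ltnW hk.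
rewrite !natrM.
rewrite le_eqVlt; apply/orP; left; apply/eqP; field.
by rewrite P0 /= k0.
Qed.

Definition ecount (x : X) (l : lab d) : nat := \sum_(i : 'I_n) ((x i %% k)%N != cN i x l).
Definition phi (l : lab d) (w : R) (i : 'I_n) (x : X) : R :=
  if ((x i %% k)%N == cN i x l) then 1 else w.

Lemma psi_sum (c : 'I_k) (w : R) :
  \sum_(b : 'I_(2*k)) (if ((b %% k)%N == c) then 1 else w) = 2 * (1 + (k - 1)%:R * w).
Proof.
rewrite sum_split2.
rewrite (eq_bigr (fun b : 'I_k => 2 * (if (b : nat) == (c : nat) then 1 else w))); last first.
  move=> b _; rewrite lo_mod hi_mod; lra.
rewrite -big_distrr (bigD1 c) //= eqxx; congr (_ * (_ + _)).
rewrite (eq_bigr (fun _ => w)); last first.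
  by move=> b hb; have -> : ((b : nat) == c) = false by apply/negbTE.
rewrite sumr_const (_ : #|_| = (k-1)%N); first by rewrite mulr_natl.
transitivity #|predC1 c|; first by apply: eq_card.
by rewrite cardC1 card_ord subn1.
Qed.

Lemma Tm l (w : R) : forall m, (m <= n)%N ->
  \sum_x \prod_(i : 'I_n | (i < m)%N) phi l w i x = (2 * (1 + (k - 1)%:R * w)) ^+ m * NR ^+ (n - m).
Proof.
have NR0 : NR != 0 by exact: lt0r_neq0 NR_gt0.
set C := 2 * (1 + (k - 1)%:R * w).
elim=> [|m IH] hm.
  rewrite expr0 mul1r subn0.
  rewrite (eq_bigr (fun _ => 1)); last by move=> x _; rewrite big_pred0.
  by rewrite sumr_const card_ffun !card_ord -[_ *+ _]mulr_natr mul1r natrX.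
have hmn : (m < n)%N by [].
pose im := Ordinal hmn.
pose G x := \prod_(i : 'I_n | (i < m)%N) phi l w i x.
rewrite (eq_bigr (fun x => phi l w im x * G x)); last first.
  move=> x _; rewrite (bigD1 im) //=; congr (_ * _); apply: eq_bigl => i.
  rewrite -(inj_eq val_inj) /=; have := ltn_ord i; move: (i : nat) => ii _.
  by apply/idP/idP; lia.
rewrite (@avg_id k n R m _ k_gt0 (ltnW hmn)).
rewrite (eq_bigr (fun x => (NR ^+ (n - m))^-1 * (G x * (NR ^+ (n - m.+1) * C)))); last first.
  move=> x _; congr (_ * _).
  rewrite (eq_bigr (fun y => G x * phi l w im y)); last first.
    move=> y hy; rewrite mulrC; congr (_ * _); apply: eq_bigr => i hi.
    have hiy : agree i x y by apply: agree_le hy; apply: ltnW.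
    rewrite /phi (@cN_agree i y x l); last by rewrite agree_sym.
    by rewrite (agreeP _ _ _ hy i hi).
  rewrite -mulr_sumr; congr (_ * _).
  rewrite (split_agree _ im) /C -(psi_sum (cN im x l)) mulr_sumr; apply: eq_bigr => b _.
  rewrite (eq_bigr (fun _ => if ((b %% k)%N == cN im x l) then 1 else w)); last first.
    move=> y; rewrite agree_setc => /andP[hy /eqP hb].
    rewrite /phi (@cN_agree im y x l); last by rewrite agree_sym.
    by rewrite hb.
  rewrite sumr_const.
  have -> : #|[pred y | agree im.+1 (setc x im b) y]| = ((2*k) ^ (n - m.+1))%N.
    exact: card_agree.
  by rewrite -[_ *+ _]mulr_natr natrX mulrC.
rewrite (eq_bigr (fun x => ((NR ^+ (n - m))^-1 * NR ^+ (n - m.+1) * C) * G x)); last first.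
  by move=> x _; ring.
rewrite -mulr_sumr IH; last exact: ltnW.
rewrite -(subnSK hmn) !exprS.
set P := NR ^+ (n - m.+1).
have P0 : P != 0 by rewrite expf_neq0.
field.
by rewrite P0 /= pnatr_eq0 -lt0n k_gt0.
Qed.

Lemma count_eq l (w : R) : \sum_x w ^+ ecount x l = (2 * (1 + (k - 1)%:R * w)) ^+ n.
Proof.
have := Tm l w (leqnn n); rewrite subnn expr0 mulr1 => <-; apply: eq_bigr => x _.
rewrite /ecount -prodrXr; apply: eq_big => [i|i _]; first by rewrite ltn_ord.
by rewrite /phi; case: eqP.
Qed.

Lemma S1_eq : \sum_(x : X) \sum_l Pl f x l = NR ^+ n.
Proof.
rewrite (eq_bigr (fun _ => 1)); last by move=> x _; apply: Pl_sum.
by rewrite sumr_const card_ffun !card_ord -[_ *+ _]mulr_natr mul1r natrX.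
Qed.

Lemma jensen (w c : R) : 0 < w -> w <= 1 ->
  \sum_x \sum_l Pl f x l * (ecount x l)%:R <= c * NR ^+ n ->
  NR ^+ n * expR (c * ln w) <= \sum_x \sum_l Pl f x l * w ^+ ecount x l.
Proof.
move=> w0 w1 H.
set E := expR (c * ln w).
have lw : ln w <= 0 by apply: ln_le0.
have pt : forall x l, Pl f x l * (E + E * ln w * (ecount x l)%:R - E * ln w * c)
                    <= Pl f x l * w ^+ ecount x l.
  move=> x l; apply: ler_wpM2l; first exact: Pl_ge0.
  have -> : w ^+ ecount x l = E * expR (((ecount x l)%:R - c) * ln w).
    rewrite /E -expRD -{1}(@lnK _ w) ?posrE // -expRM_natl; congr expR; ring.
  have := expR_ge1Dx (((ecount x l)%:R - c) * ln w).
  have E0 : 0 <= E by apply: expR_ge0.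
  move=> h; apply: le_trans (ler_wpM2l E0 h); rewrite le_eqVlt; apply/orP; left; apply/eqP; ring.
apply: le_trans (ler_sum _ (fun x _ => ler_sum _ (fun l _ => pt x l))).
have -> : \sum_x \sum_l Pl f x l * (E + E * ln w * (ecount x l)%:R - E * ln w * c) =
   E * (\sum_x \sum_l Pl f x l) + E * ln w * (\sum_x \sum_l Pl f x l * (ecount x l)%:R)
   - E * ln w * c * (\sum_x \sum_l Pl f x l).
  have ex : forall x : X, \sum_l Pl f x l * (E + E * ln w * (ecount x l)%:R - E * ln w * c) =
     E * (\sum_l Pl f x l) + E * ln w * (\sum_l Pl f x l * (ecount x l)%:R)
     - E * ln w * c * (\sum_l Pl f x l).
    move=> x.
    rewrite (eq_bigr (fun l => E * Pl f x l + E * ln w * (Pl f x l * (ecount x l)%:R) - E * ln w * c * Pl f x l)); last by move=> l _; ring.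
    by rewrite sumrB big_split /= -!mulr_sumr.
  rewrite (eq_bigr _ (fun x _ => ex x)).
  by rewrite sumrB big_split /= -!mulr_sumr.
rewrite S1_eq.
have : E * ln w * (\sum_x \sum_l Pl f x l * (ecount x l)%:R - c * NR ^+ n) >= 0.
  apply: mulr_le0; first by rewrite mulr_ge0_le0 // expR_ge0.
  by rewrite subr_le0.
set S2 := \sum_x _; move=> h; nra.
Qed.

Lemma jensen0 :
  \sum_x \sum_l Pl f x l * (ecount x l)%:R <= 0 ->
  NR ^+ n <= \sum_x \sum_l Pl f x l * 0 ^+ ecount x l.
Proof.
move=> H.
have pt : forall x l, Pl f x l - Pl f x l * (ecount x l)%:R <= Pl f x l * 0 ^+ ecount x l.
  move=> x l; rewrite -{1}(mulr1 (Pl f x l)) -mulrBr; apply: ler_wpM2l; first exact: Pl_ge0.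
  rewrite expr0n; case: (ecount x l) => [|e] /=; first by rewrite subr0.
  by rewrite subr_le0 ler1n.
apply: le_trans (ler_sum _ (fun x _ => ler_sum _ (fun l _ => pt x l))).
rewrite (eq_bigr (fun x => \sum_l Pl f x l - \sum_l Pl f x l * (ecount x l)%:R)); last first.
  by move=> x _; rewrite sumrB.
rewrite sumrB S1_eq; lra.
Qed.

Lemma upper (w : R) : 0 <= w ->
  \sum_x \sum_l Pl f x l * w ^+ ecount x l <= (2 * d + 1)%:R * (2 * (1 + (k - 1)%:R * w)) ^+ n.
Proof.
move=> w0.
apply: (@le_trans _ _ (\sum_x \sum_(l : lab d) w ^+ ecount x l)).
  apply: ler_sum => x _; apply: ler_sum => l _.
  by rewrite -{2}(mul1r (w ^+ _)); apply: ler_wpM2r; [apply: exprn_ge0|apply: Pl_le1].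
rewrite exchange_big /= (eq_bigr (fun _ => (2 * (1 + (k - 1)%:R * w)) ^+ n)); last first.
  by move=> l _; apply: count_eq.
rewrite sumr_const (_ : #|_| = (2 * d + 1)%N); first by rewrite [X in _ <= X]mulr_natl.
transitivity #|{: lab d}|; first by apply: eq_card.
by rewrite card_sum card_unit card_prod card_ord card_bool addnC mulnC.
Qed.

End Main.

Lemma expR_nat_ln (R : realType) (n : nat) (x : R) : 0 < x -> expR (n%:R * ln x) = x ^+ n.
Proof. by move=> hx; rewrite expRM_natl lnK // posrE. Qed.

Unset Implicit Arguments.

Theorem theorem2 (R : realType) (k n d : nat)
  (hk : (2 <= k)%N) (hn : (1 <= n)%N) (hd : (1 <= d)%N)
  (f : {ffun 'I_n -> 'I_(2*k)} -> 'rV[R]_d)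
  (hf : forall x, norm1 (f x) <= 1)
  (eps : R) (heps : eps < 1 / (k - 1)%:R)
  (hyp : forall (i : 'I_n) (x : {ffun 'I_n -> 'I_(2*k)}) (r : nat),
     (1 <= r)%N -> (r <= k - 1)%N ->
     (2 * k)%:R^-1 * norm1
       (\sum_(b : 'I_(2*k) | ((b < r)%N || ((k <= b)%N && (b < k + r)%N)))
           pavg f i.+1 (setc x i b)
        - \sum_(b : 'I_(2*k) | ~~ ((b < r)%N || ((k <= b)%N && (b < k + r)%N)))
           pavg f i.+1 (setc x i b))
     >= 1 - eps) :
  let delta := (k - 1)%:R * eps / 2 in
  (d%:R : R) >= 2 `^ ((log2 (k%:R : R) - delta * log2 ((k - 1)%:R : R) - Hbin delta)
                        * n%:R - 1) - 1 / 2.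
Proof.
cbv zeta; set delta := (k - 1)%:R * eps / 2.
have k_gt0 : (0 < k)%N by apply: ltnW.
set NR := ((2 * k)%:R : R).
have NR_gt : 0 < NR by rewrite ltr0n muln_gt0 k_gt0.
set K := ((k - 1)%:R : R).
have K1 : 1 <= K by rewrite ler1n subn_gt0.
have kpos : 0 < (k%:R : R) by rewrite ltr0n.
have lev : forall i : 'I_n,
    \sum_x \sum_l Pl f x l * ((x i %% k)%N != cN f hk i x l)%:R <= NR ^+ n * delta.
  by move=> i; apply: (level_err hf) => x r r1 rk; apply: hyp.
have tot : \sum_x \sum_l Pl f x l * (ecount f hk x l)%:R <= n%:R * delta * NR ^+ n.
  rewrite (eq_bigr (fun x => \sum_i \sum_l Pl f x l * ((x i %% k)%N != cN f hk i x l)%:R)); last first.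
    move=> x _; rewrite exchange_big /=; apply: eq_bigr => l _.
    by rewrite /ecount natr_sum mulr_sumr.
  rewrite exchange_big /=.
  apply: le_trans (ler_sum _ (fun i _ => lev i)) _.
  rewrite sumr_const card_ord -mulr_natl le_eqVlt; apply/orP; left; apply/eqP; ring.
have d0 : 0 <= delta.
  have S0 : 0 <= \sum_x \sum_l Pl f x l * ((x (Ordinal hn) %% k)%N != cN f hk (Ordinal hn) x l)%:R.
    apply: sumr_ge0 => x _; apply: sumr_ge0 => l _; apply: mulr_ge0 => //.
    exact: Pl_ge0.
  have := le_trans S0 (lev (Ordinal hn)).
  by rewrite pmulr_rge0 // exprn_gt0.
have dlt : delta < 1 / 2.
  have Kpos : 0 < K by apply: lt_le_trans K1.
  rewrite ltr_pdivlMr // in heps.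
  rewrite /delta -/K; lra.
suff main : expR ((log2 (k%:R : R) - delta * log2 K - Hbin delta) * n%:R * ln 2) <= (2 * d + 1)%:R.
  rewrite /powR (_ : (2 == 0) = false); last by apply/negbTE; rewrite pnatr_eq0.
  rewrite mulrBl mul1r expRB lnK ?posrE //.
  move: main; rewrite natrD natrM; lra.
have ln2_gt0 : 0 < ln (2 : R) by apply: ln_gt0; rewrite ltr1n.
have H2 : forall w E : R, NR ^+ n * E <= (2 * d + 1)%:R * (2 * (1 + K * w)) ^+ n ->
    k%:R ^+ n * E <= (2 * d + 1)%:R * (1 + K * w) ^+ n.
  move=> w E h.
  have p2 : 0 < (2 : R) ^+ n by rewrite exprn_gt0.
  rewrite -(ler_pM2l p2).
  have e1 : (2 : R) ^+ n * (k%:R ^+ n * E) = NR ^+ n * E by rewrite /NR natrM exprMn; ring.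
  have e2 : (2 : R) ^+ n * ((2 * d + 1)%:R * (1 + K * w) ^+ n) =
            (2 * d + 1)%:R * (2 * (1 + K * w)) ^+ n by rewrite exprMn; ring.
  by rewrite e1 e2.
have hlog2 : forall x : R, log2 x * ln 2 = ln x.
  by move=> x; rewrite /log2 mulfVK // lt0r_neq0.
have [d_eq0|dpos] : 0 = delta \/ 0 < delta.
  by move: d0; rewrite le_eqVlt => /orP[/eqP->|->]; auto.
  have tot0 : \sum_x \sum_l Pl f x l * (ecount f hk x l)%:R <= 0.
    by move: tot; rewrite -d_eq0 mulr0 mul0r.
  have J := jensen0 (hk:=hk) hf tot0.
  have U := upper hf hk (lexx 0).
  have h0 : NR ^+ n * 1 <= (2 * d + 1)%:R * (2 * (1 + K * 0)) ^+ n by rewrite mulr1; exact: le_trans J U.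
  move: (H2 0 1 h0) => {}h0.
  have e1 : (1 + K * 0) ^+ n = 1 by rewrite (_ : 1 + K * 0 = 1) ?expr1n //; lra.
  rewrite e1 !mulr1 in h0.
  have Hb0 : Hbin (0 : R) = 0.
    rewrite /Hbin /xlog2x eqxx subr0 (negbTE (oner_neq0 R)) /log2 ln1 mul0r mulr0; lra.
  rewrite -d_eq0 Hb0 mul0r !subr0.
  by rewrite mulrAC hlog2 mulrC expR_nat_ln.
set w := delta / (K * (1 - delta)).
have Kpos : 0 < K by apply: lt_le_trans K1.
have omd : 0 < 1 - delta by lra.
have w0 : 0 < w by rewrite /w divr_gt0 // mulr_gt0.
have w1 : w <= 1.
  rewrite /w ler_pdivrMr ?mulr_gt0 // mul1r; nra.
have J := jensen (hk:=hk) hf w0 w1 tot.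
have U := upper hf hk (ltW w0).
have := H2 w _ (le_trans J U).
have eKw : 1 + K * w = (1 - delta)^-1.
  rewrite /w; field; rewrite lt0r_neq0 // lt0r_neq0 //.
rewrite eKw exprVn => h.
have lnw : ln w = ln delta - ln K - ln (1 - delta).
  have hp : 0 < K * (1 - delta) by rewrite mulr_gt0.
  have := @ln_div R delta (K * (1 - delta)); rewrite !posrE => -> //.
  have := @lnM R K (1 - delta); rewrite !posrE => -> //; ring.
have eA : (log2 (k%:R : R) - delta * log2 K - Hbin delta) * n%:R * ln 2 =
    n%:R * ln (k%:R : R) + (n%:R * delta) * ln w + n%:R * ln (1 - delta).
  rewrite lnw /Hbin /xlog2x (_ : (delta == 0) = false); last by apply/negbTE; rewrite lt0r_neq0.
  rewrite (_ : (1 - delta == 0) = false); last by apply/negbTE; rewrite lt0r_neq0.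
  rewrite /log2; field; exact: lt0r_neq0.
rewrite eA !expRD !expR_nat_ln //.
rewrite -(ler_pM2r (exprn_gt0 n omd)) in h.
move: h; rewrite mulfVK; last by rewrite expf_neq0 // lt0r_neq0.
by rewrite mulrAC.
Qed.
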